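(* Let $(S,E,I,R^{\mathrm T},R^{\mathrm P},D)$ be a solution of the SEIR$^{\mathrm T}$R$^{\mathrm P}$D system with distributed delays described in the context, where $\gamma\ge 0$, $\mu\ge 0$, $p\in[0,1]$ are constants and $\beta(t)\ge 0$ for all $t$. Assume the history data $S(s)=c_S>0$ and $I(s)=c_I>0$ for all $s\le 0$, and the initial data $E(0)=\beta_0 c_I c_S\int_\theta^L \Psi(\tau)\tau\,d\tau$, $R^{\mathrm T}(0)=c_I p\gamma\int_\epsilon^M\Phi(\rho)\rho\,d\rho$, $R^{\mathrm P}(0)=(1-p)\gamma c_I\int_\theta^L\Psi(\tau)\tau\,d\tau$. Then $S(t)$, $E(t)$, $I(t)$, $R^{\mathrm T}(t)$ and $R^{\mathrm P}(t)$ are non-negative for all $t>0$.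
   Context: The system is $S'(t)=-\beta(t)I(t)S(t)+p\gamma\int_{0}^{\infty}I(t-\rho)\Phi(\rho)\,d\rho$, $E'(t)=\beta(t)I(t)S(t)-\int_{0}^{\infty}\beta(t-\tau)I(t-\tau)S(t-\tau)\Psi(\tau)\,d\tau$, $I'(t)=\int_{0}^{\infty}\beta(t-\tau)I(t-\tau)S(t-\tau)\Psi(\tau)\,d\tau-\gamma I(t)-\mu I(t)$, $R^{\mathrm T\prime}(t)=p\gamma I(t)-p\gamma\int_{0}^{\infty}I(t-\rho)\Phi(\rho)\,d\rho$, $R^{\mathrm P\prime}(t)=(1-p)\gamma I(t)$, $D'(t)=\mu I(t)$, for $t>0$. Here $\Psi,\Phi$ are non-negative Lebesgue integrable probability densities on $[0,\infty)$ ($\int\Psi=\int\Phi=1$) with $\operatorname{supp}\Psi\subset[\theta,L]$ for some $0<\theta<L<\infty$ and $\operatorname{supp}\Phi\subset[\epsilon,M]$ for some $0<\epsilon<M<\infty$. The contact rate $\beta$ is a non-negative smooth function on $\mathbb R$, and $\beta_0$ denotes its (constant) value on the history interval, i.e. $\beta(s)=\beta_0$ for $s\le 0$. $S$ and $I$ are continuous on $\mathbb R$ (given by the history data for $s\le 0$). *)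

(* Defs.v *)
From HB Require Import structures.
From mathcomp Require Import all_boot all_order all_algebra.
From mathcomp Require Import all_classical all_reals all_analysis.
Set Implicit Arguments. Unset Strict Implicit. Unset Printing Implicit Defensive.
Import Order.TTheory GRing.Theory Num.Theory.
Import numFieldNormedType.Exports.
Local Open Scope classical_set_scope.
Local Open Scope ring_scope.

Definition smooth {R : realType} (f : R -> R) : Prop :=
  forall (n : nat) (x : R), derivable (iter n (fun g : R -> R => derive1 g) f) x 1.

Definition LInt {R : realType} (D : set R) (f : R -> R) : R :=
  Rintegral (@lebesgue_measure R) D f.

Definition density_supp {R : realType} (f : R -> R) (a b : R) : Prop :=
  [/\ 0 < a /\ a < b,
      (forall x, 0 <= f x),
      (@lebesgue_measure R).-integrable `[0, +oo[%classic (EFin \o f),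
      LInt `[0, +oo[%classic f = 1 &
      (forall x, f x != 0 -> a <= x <= b)].

(* Main.v *)
Require Import Defs.
From HB Require Import structures.
From mathcomp Require Import all_boot all_order all_algebra.
From mathcomp Require Import all_classical all_reals all_analysis.
From mathcomp Require Import measurable_realfun lebesgue_integral_under.
From mathcomp Require Import ring lra.
Import Order.TTheory GRing.Theory Num.Theory.
Import numFieldNormedType.Exports.
Local Open Scope classical_set_scope.
Local Open Scope ring_scope.

Section Helpers.
Context {R : realType}.

Lemma der_cont (f : R -> R) x : derivable f x 1 -> {for x, continuous f}.
Proof. move=> h. apply: differentiable_continuous. by apply/derivable1_diffP. Qed.

Lemma cont_bnd (h : R -> R) (a b : R) : continuous h ->
  exists K, forall x, a <= x <= b -> `|h x| <= K.
Proof.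
move=> hc.
have cc : compact [set h x | x in `[a, b]] :=
  continuous_compact (continuous_subspaceT hc) (@segment_compact _ a b).
have := compact_bounded cc.
move=> -[M [_ HM]]; exists (`|M| + 1) => x xab.
apply: (HM (`|M| + 1)); first by rewrite (le_lt_trans (ler_norm M)) // ltrDl.
by exists x => //=; rewrite in_itv /=.
Qed.

Lemma mono_MVT (f df : R -> R) (a b : R) : a < b ->
  (forall x : R, a < x < b -> is_derive x 1 f (df x)) ->
  (forall x : R, a < x < b -> 0 <= df x) ->
  {within `[a, b], continuous f} -> f a <= f b.
Proof.
move=> ab hd hp hc.
have hd' : forall x, x \in `]a, b[ -> is_derive x 1 f (df x).
  by move=> x; rewrite in_itv /= => /hd.
have [c c_in eq] := MVT ab hd' hc.
rewrite -subr_ge0 eq mulr_ge0 //; first by apply: hp; move: c_in; rewrite in_itv.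
by rewrite subr_ge0 ltW.
Qed.

Lemma const_MVT (f : R -> R) (a b : R) : a < b ->
  (forall x : R, a < x < b -> is_derive x 1 f 0) ->
  {within `[a, b], continuous f} -> f b = f a.
Proof.
move=> ab hd hc.
have hd' : forall x, x \in `]a, b[ -> is_derive x 1 f ((fun=> 0) x).
  by move=> x; rewrite in_itv /= => /hd.
have [c c_in eq] := MVT ab hd' hc.
by apply/eqP; rewrite -subr_eq0 eq mul0r.
Qed.

Lemma supp_int (Psi h : R -> R) (a b : R) : density_supp Psi a b ->
  LInt `[0, +oo[ (fun y => h y * Psi y) = LInt `[a, b] (fun y => h y * Psi y).
Proof.
move=> [[a0 ab] P0 Pi P1 Ps].
rewrite /LInt.
rewrite [LHS]Rintegral_mkcond [RHS]Rintegral_mkcond.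
apply: eq_Rintegral => y _; rewrite !patchE.
have [->|nz] := eqVneq (Psi y) 0.
  by rewrite mulr0; case: (y \in _); case: (y \in _).
have /andP[ay yb] := Ps y nz.
rewrite mem_set; last by rewrite /= in_itv /= (le_trans (ltW a0) ay).
by rewrite mem_set //= in_itv /= ay yb.
Qed.
Lemma is_derive_ext (f g : R -> R) (x df dg : R) :
  f =1 g -> df = dg -> is_derive x 1 f df -> is_derive x 1 g dg.
Proof. by move=> /funext -> ->. Qed.

Definition Pg (F : R -> R) (F0 : R) (x : R) : R := LInt `[-1, x] (fun s => F s - F0).
Definition PP (F : R -> R) (F0 : R) (x : R) : R := F0 * x + Pg F F0 x.

Lemma Pg0 (F : R -> R) (F0 x : R) : (forall s, s <= 0 -> F s = F0) -> x <= 0 -> Pg F F0 x = 0.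
Proof.
move=> hF x0; rewrite /Pg /LInt.
rewrite (@eq_Rintegral _ _ _ _ _ (fun=> 0)); last first.
  move=> s; rewrite inE /= in_itv /= => /andP[_ sx].
  by rewrite hF ?subrr // (le_trans sx x0).
by rewrite Rintegral_cst // mul0r.
Qed.

Lemma Pg_derive (F : R -> R) (F0 x : R) : continuous F ->
  (forall s, s <= 0 -> F s = F0) -> is_derive x 1 (Pg F F0) (F x - F0).
Proof.
move=> cF hF.
have cg : continuous (fun s => F s - F0).
  by move=> y; apply: continuousB; [exact: cF | exact: cvg_cst].
have [x0|xpos] := ltP x 0.
  rewrite (hF x (ltW x0)) subrr.
  apply: (@near_eq_is_derive _ _ _ (cst 0)).

  near=> z; rewrite Pg0 //; apply: ltW; near: z; exact: lt_nbhsl.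
have intg : (@lebesgue_measure R).-integrable `[-1, x + 1] (EFin \o (fun s => F s - F0)).
  apply: continuous_compact_integrable; first exact: segment_compact.
  exact: continuous_subspaceT.
have xx1 : x < x + 1 by rewrite ltrDl.
have := @continuous_FTC1_closed R (fun s => F s - F0) (-1) x (x + 1) xx1 intg.
move=> /(_ (lt_le_trans (ltrN10 R) xpos) (cg x)) [d1 d2].
apply: DeriveDef; first exact: d1.
by rewrite -derive1E d2.
Unshelve. all: by end_near.
Qed.

Lemma PP_derive (F : R -> R) (F0 x : R) : continuous F ->
  (forall s, s <= 0 -> F s = F0) -> is_derive x 1 (PP F F0) (F x).
Proof.
move=> cF hF.
have h1 := is_deriveZ F0 (is_derive_id x 1).
have := is_deriveD h1 (@Pg_derive F F0 x cF hF).
apply: is_derive_ext => [y|]; first by [].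
by rewrite /GRing.scale /= mulr1 addrC subrK.
Qed.

Lemma bnd_of (h : R -> R) (A : set R) K : (forall x, A x -> `|h x| <= K) ->
  [bounded h x | x in A].
Proof.
move=> hK; exists K; split; first exact: num_real.
by move=> M KM x Ax; apply: le_trans (hK x Ax) (ltW KM).
Qed.

Lemma int_mul (h Psi : R -> R) (a b : R) :
  (@lebesgue_measure R).-integrable `[a, b] (EFin \o Psi) -> continuous h ->
  (@lebesgue_measure R).-integrable `[a, b] (EFin \o (fun y => h y * Psi y)).
Proof.
move=> iP ch.
have -> : EFin \o (fun y => h y * Psi y) = (fun y => (h y)%:E * (Psi y)%:E)%E.
  by apply/funext => y; rewrite /= EFinM.
apply: integrableMr => //.
  apply: measurable_funS (continuous_measurable_fun ch) => //.
have [K hK] := cont_bnd h a b ch.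
apply: bnd_of => x; rewrite /= in_itv /=; exact: hK.
Qed.

Lemma shift_derive (P dP : R -> R) (z y : R) :
  (forall x : R, is_derive x 1 P (dP x)) ->
  is_derive z 1 (fun z => P (z - y)) (dP (z - y)).
Proof.
move=> hP.
have h1 : is_derive z 1 (fun z : R => z - y) 1.
  have := is_deriveB (is_derive_id z 1) (is_derive_cst y z 1).
  by apply: is_derive_ext => [w|]; [by [] | rewrite subr0].
have := @is_derive1_comp _ P (fun w => w - y) z (dP (z - y)) 1 (hP (z - y)) h1.
by apply: is_derive_ext => [w|]; [by [] | rewrite mulr1].
Qed.

Lemma shiftM_derive (P dP : R -> R) (k z y : R) :
  (forall x : R, is_derive x 1 P (dP x)) ->
  is_derive z 1 (fun z => P (z - y) * k) (dP (z - y) * k).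
Proof.
move=> hP; have := is_deriveZ k (shift_derive P dP z y hP).
by apply: is_derive_ext => [w|]; rewrite /GRing.scale /= mulrC.
Qed.

Lemma refl_derive (P dP : R -> R) (x y : R) :
  (forall x : R, is_derive x 1 P (dP x)) ->
  is_derive y 1 (fun y => P (x - y)) (- dP (x - y)).
Proof.
move=> hP.
have h1 : is_derive y 1 (fun y : R => x - y) (-1).
  have := is_deriveB (is_derive_cst x y 1) (is_derive_id y 1).
  by apply: is_derive_ext => [w|]; [by [] | rewrite sub0r].
have := @is_derive1_comp _ P (fun w => x - w) y (dP (x - y)) (-1) (hP (x - y)) h1.
by apply: is_derive_ext => [w|]; [by [] | rewrite mulrN1].
Qed.

Lemma key (F Psi X : R -> R) (th L F0 c : R) :
  density_supp Psi th L -> continuous F -> (forall s, 0 <= F s) ->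
  (forall s, s <= 0 -> F s = F0) -> 0 <= c ->
  {within `[0, +oo[, continuous X} ->
  X 0 = c * F0 * LInt `[th, L] (fun tau => Psi tau * tau) ->
  (forall t : R, 0 < t -> is_derive t 1 X
     (c * (F t - LInt `[0, +oo[ (fun tau => F (t - tau) * Psi tau)))) ->
  forall t : R, 0 < t -> 0 <= X t.
Proof.
move=> dP cF Fge0 hF c0 cX X0 dX t t0.
have dP' := dP; case: dP' => [[th0 thL] Pge0 Pint P1 Psupp].
have mB := @measurable_itv R (`[th, L]%R).
have sB : `[th, L] `<=` `[0, +oo[.
  move=> y; rewrite /= !in_itv /= => /andP[thy _].
  by rewrite (le_trans (ltW th0) thy).
have iPB : (@lebesgue_measure R).-integrable `[th, L] (EFin \o Psi).
  exact: integrableS Pint.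
have dPP : forall x : R, is_derive x 1 (PP F F0) (F x).
  by move=> x; exact: PP_derive.
have cP : continuous (PP F F0).
  by move=> x; apply: der_cont; case: (dPP x).
have cPs : forall x, continuous (fun y => PP F F0 (x - y)).
  by move=> x y; apply: der_cont; case: (refl_derive (PP F F0) F x y dPP).
have intf : forall x, (@lebesgue_measure R).-integrable `[th, L]
    (EFin \o (fun y => PP F F0 (x - y) * Psi y)).
  by move=> x; exact: int_mul.
pose Q x := LInt `[th, L] (fun y => PP F F0 (x - y) * Psi y).
have dQ : forall x : R, is_derive x 1 Q (LInt `[th, L] (fun y => F (x - y) * Psi y)).
  move=> x.
  have [K hK] := cont_bnd F (x - 1 - L) (x + 1) cF.
  pose f := fun z y => PP F F0 (z - y) * Psi y.
  have Ia : `](x - 1), (x + 1)[%classic x.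
    by rewrite /= in_itv /=; apply/andP; split; lra.
  have intf' : forall z, `](x - 1), (x + 1)[%classic z ->
      (@lebesgue_measure R).-integrable `[th, L] (EFin \o f z).
    by move=> z _; exact: intf.
  have dd : forall z y : R, derivable (f^~ y) z 1.
    by move=> z y; case: (shiftM_derive (PP F F0) F (Psi y) z y dPP).
  have derf1 : forall z y, `](x - 1), (x + 1)[%classic z -> `[th, L]%classic y ->
      derivable (f^~ y) z 1.
    by move=> z y _ _; exact: dd.
  have Gge0 : forall y, 0 <= `|K| * Psi y by move=> y; rewrite mulr_ge0.
  have intG : (@lebesgue_measure R).-integrable `[th, L]
      (EFin \o (fun y => `|K| * Psi y)).
    have := @integrableZl _ _ _ (@lebesgue_measure R) _ mB `|K| _ iPB.
    move=> h; apply: (@eq_integrable _ _ _ (@lebesgue_measure R) _ mB _ _ _ h) => y _.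
    by rewrite /= EFinM.
  have pd : forall z y : R, partial1of2 f z y = F (z - y) * Psi y.
    move=> z y; rewrite partial1of2E /f /=.
    by case: (shiftM_derive (PP F F0) F (Psi y) z y dPP).
  have Gub : forall z y, `](x - 1), (x + 1)[%classic z -> `[th, L]%classic y ->
      `|partial1of2 f z y| <= `|K| * Psi y.
    move=> z y; rewrite /= !in_itv /= => /andP[z1 z2] /andP[y1 y2].
    rewrite pd normrM (ger0_norm (Pge0 y)) ler_wpM2r //.
    apply: le_trans (ler_norm K); apply: hK.
    by apply/andP; split; lra.
  have der := derivable_under_integral (mu := @lebesgue_measure R) mB Ia intf' derf1 Gge0 intG Gub.
  have val := differentiation_under_integral (mu := @lebesgue_measure R) mB Ia intf' derf1 Gge0 intG Gub.
  apply: DeriveDef; first exact: der.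
  rewrite -derive1E val; apply: eq_Rintegral => y _; exact: pd.
pose G x := c * (PP F F0 x - Q x).
have dG : forall x : R, is_derive x 1 G
    (c * (F x - LInt `[th, L] (fun y => F (x - y) * Psi y))).
  move=> x; have := is_deriveZ c (is_deriveB (dPP x) (dQ x)).
  by apply: is_derive_ext.
have cG : continuous G by move=> x; apply: der_cont; case: (dG x).
pose H x := X x - G x.
have sB0 : `[0, t] `<=` `[0, +oo[.
  by move=> y; rewrite /= !in_itv /= => /andP[-> _].
have Ht : H t = H 0.
  apply: const_MVT => //.
    move=> z /andP[z0 zt]; have := is_deriveB (dX z z0) (dG z).
    apply: is_derive_ext => //.
    by rewrite (supp_int Psi (fun tau => F (z - tau)) th L dP) subrr.
  move=> z; apply: continuousB.
    exact: (continuous_subspaceW sB0 cX).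
  exact: (continuous_subspaceT cG).
have PP0 : forall y : R, y <= 0 -> PP F F0 y = F0 * y.
  by move=> y y0; rewrite /PP (Pg0 F F0 y hF y0) addr0.
have cid : continuous (fun y : R => y) by move=> y; exact: cvg_id.
have iPy : (@lebesgue_measure R).-integrable `[th, L] (EFin \o (fun y => Psi y * y)).
  have h := int_mul (fun y => y) Psi th L iPB cid.
  apply: (@eq_integrable _ _ _ (@lebesgue_measure R) _ mB _ _ _ h) => y _.
  by rewrite /= mulrC.
have Q0 : Q 0 = - (F0 * LInt `[th, L] (fun y => Psi y * y)).
  have -> : Q 0 = LInt `[th, L] (fun y => (- F0) * (Psi y * y)).
    apply: eq_Rintegral => y; rewrite inE /= in_itv /= => /andP[y1 _].
    rewrite PP0; last by rewrite sub0r oppr_le0 (le_trans (ltW th0) y1).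
    by rewrite sub0r mulrN !mulNr -mulrA [y * _]mulrC.
  by rewrite /LInt (RintegralZl (mu := @lebesgue_measure R) _ mB iPy) mulNr.
have G0 : G 0 = X 0.
  by rewrite /G (PP0 0 (lexx 0)) Q0 X0 mulr0 sub0r opprK mulrA.
have XG : X t = G t.
  by apply/eqP; rewrite -subr_eq0; apply/eqP; rewrite -/(H t) Ht /H G0 subrr.
rewrite XG /G; apply: mulr_ge0; first exact: c0.
have PB1 : LInt `[th, L] Psi = 1.
  rewrite -P1.
  have e1 : forall D, LInt D (fun y => 1 * Psi y) = LInt D Psi.
    by move=> D; apply: eq_Rintegral => y _; rewrite mul1r.
  rewrite -[LHS]e1 -[RHS]e1.
  by rewrite (supp_int Psi (fun=> 1) th L dP).
have ccst : continuous (fun _ : R => PP F F0 t) by move=> y; apply: cvg_cst.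
have int1 := int_mul (fun _ : R => PP F F0 t) Psi th L iPB ccst.
have eqPQ : PP F F0 t - Q t =
    LInt `[th, L] (fun y => (PP F F0 t - PP F F0 (t - y)) * Psi y).
  have -> : LInt `[th, L] (fun y => (PP F F0 t - PP F F0 (t - y)) * Psi y) =
      LInt `[th, L] (fun y => PP F F0 t * Psi y - PP F F0 (t - y) * Psi y).
    by apply: eq_Rintegral => y _; rewrite mulrBl.
  rewrite /LInt (RintegralB (mu := @lebesgue_measure R) mB int1 (intf t)).
  rewrite (RintegralZl (mu := @lebesgue_measure R) _ mB iPB).
  by rewrite /LInt in PB1; rewrite PB1 mulr1.
rewrite eqPQ; apply: Rintegral_ge0 => y /=; rewrite in_itv /= => /andP[y1 y2].
apply: mulr_ge0; last exact: Pge0.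
rewrite subr_ge0.
have lt : t - y < t by rewrite ltrBlDr ltrDl (lt_le_trans th0 y1).
have d1 : forall x : R, t - y < x < t -> is_derive x 1 (PP F F0) (F x).
  by move=> x _; exact: dPP.
have n1 : forall x : R, t - y < x < t -> 0 <= F x by move=> x _; exact: Fge0.
exact: (mono_MVT (PP F F0) F (t - y) t lt d1 n1 (continuous_subspaceT cP)).
Qed.


Lemma exp_derive (k x : R) : is_derive x 1 (fun x => expR (k * x)) (expR (k * x) * k).
Proof.
have h1 : is_derive x 1 (fun x : R => k * x) k.
  have := is_deriveZ k (is_derive_id x 1).
  by apply: is_derive_ext => [y|]; rewrite /GRing.scale /= ?mulr1.
exact: (@is_derive1_comp _ expR (fun x => k * x) x (expR (k * x)) k (is_derive_expR _) h1).
Qed.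

Lemma alg1 (a b c k : R) : a * (b * k) + b * c = b * (c + k * a).
Proof. ring. Qed.

Lemma expM_derive (f : R -> R) (df k x : R) : is_derive x 1 f df ->
  is_derive x 1 (fun x => f x * expR (k * x)) (expR (k * x) * (df + k * f x)).
Proof.
move=> hf; have := is_deriveM hf (exp_derive k x).
by apply: is_derive_ext => [y|]; [by [] | rewrite /GRing.scale /= alg1].
Qed.

Lemma expM_cont (f : R -> R) (k : R) : continuous f ->
  continuous (fun x => f x * expR (k * x)).
Proof.
move=> cf x.
have ce : {for x, continuous (fun y => expR (k * y))}.
  by apply: der_cont; case: (exp_derive k x).
exact: (@continuousM _ _ f (fun y => expR (k * y)) x (cf x) ce).
Qed.

Lemma alg4 (a b c d : R) : a * b * c * d = b * c * a * d.
Proof. ring. Qed.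

Lemma alg2 (J g m I : R) : J - g * I - m * I + (g + m) * I = J.
Proof. ring. Qed.

Lemma alg3 (b I S p g J K : R) :
  - b * I * S + p * g * J + K * S = (K - b * I) * S + p * g * J.
Proof. ring. Qed.

Lemma posSI (Psi Phi beta S I : R -> R) (th L eps M gamma mu p cS cI : R) :
  density_supp Psi th L -> density_supp Phi eps M -> continuous beta ->
  (forall t : R, 0 <= beta t) -> 0 <= gamma -> 0 <= mu -> 0 <= p ->
  0 < cS -> 0 < cI ->
  (forall s : R, s <= 0 -> S s = cS) -> (forall s : R, s <= 0 -> I s = cI) ->
  continuous S -> continuous I ->
  (forall t : R, 0 < t -> is_derive t 1 S
      (- beta t * I t * S t
       + p * gamma * LInt `[0, +oo[%classic (fun rho => I (t - rho) * Phi rho))) ->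
  (forall t : R, 0 < t -> is_derive t 1 I
      (LInt `[0, +oo[%classic
           (fun tau => beta (t - tau) * I (t - tau) * S (t - tau) * Psi tau)
       - gamma * I t - mu * I t)) ->
  forall t : R, 0 < S t /\ 0 < I t.
Proof.
move=> dPsi dPhi cb b0 g0 m0 p0 cS0 cI0 hS hI cSc cIc dS dI.
case: dPsi => _ Psige0 _ _ _; case: dPhi => _ Phige0 _ _ _.
pose A := [set t : R | 0 < t /\ (S t <= 0 \/ I t <= 0)].
have [[t0 At0]|nA] := pselect (A !=set0); last first.
  move=> t; have [t0|tpos] := leP t 0; first by rewrite hS // hI.
  split; rewrite ltNge; apply/negP => h; apply: nA; exists t; split => //.
    by left.
  by right.
exfalso.
have hlb : has_lbound A by exists 0 => x [x0 _]; exact: ltW.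
pose T := inf A.
have T0 : 0 <= T.
  apply: lb_le_inf; first by exists t0.
  by move=> x [x0 _]; exact: ltW.
have TA : forall s, A s -> T <= s by move=> s As; exact: ge_inf.
have pos : forall s, s < T -> 0 < S s /\ 0 < I s.
  move=> s sT; have [s0|spos] := leP s 0; first by rewrite hS // hI.
  split; rewrite ltNge; apply/negP => h.
    by have := TA s (conj spos (or_introl h)); rewrite leNgt sT.
  by have := TA s (conj spos (or_intror h)); rewrite leNgt sT.
have Jnn : forall x : R, x < T -> 0 <= LInt `[0, +oo[%classic
    (fun tau => beta (x - tau) * I (x - tau) * S (x - tau) * Psi tau).
  move=> x xT; apply: Rintegral_ge0 => tau /=; rewrite in_itv /= => /andP[tau0 _].
  have xtT : x - tau < T by apply: le_lt_trans xT; rewrite lerBlDr lerDl.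
  have [hs hi] := pos _ xtT.
  apply: mulr_ge0; last exact: Psige0.
  apply: mulr_ge0; last exact: ltW hs.
  apply: mulr_ge0; last exact: ltW hi.
  exact: b0.
have Knn : forall x : R, x < T -> 0 <= LInt `[0, +oo[%classic
    (fun rho => I (x - rho) * Phi rho).
  move=> x xT; apply: Rintegral_ge0 => tau /=; rewrite in_itv /= => /andP[tau0 _].
  have xtT : x - tau < T by apply: le_lt_trans xT; rewrite lerBlDr lerDl.
  have [hs hi] := pos _ xtT.
  apply: mulr_ge0; last exact: Phige0.
  exact: ltW hi.
have posT : 0 < S T /\ 0 < I T.
  move: T0; rewrite le_eqVlt => /orP[/eqP T0'|Tpos].
    by rewrite -T0' hS // hI.
  split.
    have cbI : continuous (fun x => beta x * I x).
      by move=> x; exact: (@continuousM _ _ beta I x (cb x) (cIc x)).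
    have [K hK] := cont_bnd (fun x => beta x * I x) 0 T cbI.
    have dv : forall x : R, 0 < x < T -> is_derive x 1 (fun x => S x * expR (K * x))
        (expR (K * x) * ((K - beta x * I x) * S x + p * gamma *
           LInt `[0, +oo[%classic (fun rho => I (x - rho) * Phi rho))).
      move=> x /andP[x0 _]; have := expM_derive _ _ K _ (dS x x0).
      by apply: is_derive_ext => [y|]; [by [] | rewrite alg3].
    have nv : forall x : R, 0 < x < T -> 0 <= expR (K * x) * ((K - beta x * I x) * S x
        + p * gamma * LInt `[0, +oo[%classic (fun rho => I (x - rho) * Phi rho)).
      move=> x /andP[x0 xT]; apply: mulr_ge0; first exact: ltW (expR_gt0 _).
      apply: addr_ge0; last by apply: mulr_ge0; [exact: mulr_ge0 | exact: Knn].
      apply: mulr_ge0; last by case: (pos x xT) => /ltW.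
      rewrite subr_ge0; apply: le_trans (ler_norm _) (hK x _).
      by rewrite (ltW x0) (ltW xT).
    have := mono_MVT _ _ 0 T Tpos dv nv (continuous_subspaceT (expM_cont S K cSc)).
    rewrite /= mulr0 expR0 mulr1 hS // => h.
    by have := lt_le_trans cS0 h; rewrite pmulr_lgt0 // expR_gt0.
  have dv : forall x : R, 0 < x < T -> is_derive x 1 (fun x => I x * expR ((gamma + mu) * x))
      (expR ((gamma + mu) * x) * LInt `[0, +oo[%classic
           (fun tau => beta (x - tau) * I (x - tau) * S (x - tau) * Psi tau)).
    move=> x /andP[x0 _]; have := expM_derive _ _ (gamma + mu) _ (dI x x0).
    by apply: is_derive_ext => [y|]; [by [] | rewrite alg2].
  have nv : forall x : R, 0 < x < T -> 0 <= expR ((gamma + mu) * x) * LInt `[0, +oo[%classic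
           (fun tau => beta (x - tau) * I (x - tau) * S (x - tau) * Psi tau).
    move=> x /andP[x0 xT]; apply: mulr_ge0; first exact: ltW (expR_gt0 _).
    exact: Jnn.
  have := mono_MVT _ _ 0 T Tpos dv nv (continuous_subspaceT (expM_cont I (gamma + mu) cIc)).
  rewrite /= mulr0 expR0 mulr1 hI // => h.
  by have := lt_le_trans cI0 h; rewrite pmulr_lgt0 // expR_gt0.
have nearpos : \forall z \near T, 0 < S z /\ 0 < I z.
  near=> z; split; near: z.
    exact: (cvgr_gt _ (cSc T) 0 posT.1).
  exact: (cvgr_gt _ (cIc T) 0 posT.2).
have /nbhs_ballP[d /= d0 hd] := nearpos.
have [s As sT] := inf_adherent d0 (conj (ex_intro _ t0 At0) hlb).
have Ts := TA s As.
have [hs hi] : 0 < S s /\ 0 < I s.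
  apply: hd; rewrite -ball_normE /= distrC ger0_norm ?subr_ge0 //.
  by rewrite ltrBlDl.
case: As => _ [h|h].
  by move: hs; rewrite ltNge h.
by move: hi; rewrite ltNge h.
Unshelve. all: by end_near.
Qed.

End Helpers.

Theorem theorem1 (R : realType)
  (Psi Phi beta : R -> R) (theta L eps M beta0 gamma mu p cS cI : R)
  (S E I RT RP D : R -> R) :
  density_supp Psi theta L ->
  density_supp Phi eps M ->
  smooth beta ->
  (forall t : R, 0 <= beta t) ->
  (forall s : R, s <= 0 -> beta s = beta0) ->
  0 <= gamma -> 0 <= mu -> 0 <= p -> p <= 1 ->
  0 < cS -> 0 < cI ->
  (* history data and continuity *)
  (forall s : R, s <= 0 -> S s = cS) ->
  (forall s : R, s <= 0 -> I s = cI) ->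
  continuous S -> continuous I ->
  {within `[0, +oo[%classic, continuous E} ->
  {within `[0, +oo[%classic, continuous RT} ->
  {within `[0, +oo[%classic, continuous RP} ->
  {within `[0, +oo[%classic, continuous D} ->
  (* initial data *)
  E 0 = beta0 * cI * cS * LInt `[theta, L]%classic (fun tau => Psi tau * tau) ->
  RT 0 = cI * p * gamma * LInt `[eps, M]%classic (fun rho => Phi rho * rho) ->
  RP 0 = (1 - p) * gamma * cI * LInt `[theta, L]%classic (fun tau => Psi tau * tau) ->
  (* the delay differential system, for t > 0 *)
  (forall t : R, 0 < t -> is_derive t 1 S
      (- beta t * I t * S t
       + p * gamma * LInt `[0, +oo[%classic (fun rho => I (t - rho) * Phi rho))) ->
  (forall t : R, 0 < t -> is_derive t 1 E
      (beta t * I t * S t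
       - LInt `[0, +oo[%classic
           (fun tau => beta (t - tau) * I (t - tau) * S (t - tau) * Psi tau))) ->
  (forall t : R, 0 < t -> is_derive t 1 I
      (LInt `[0, +oo[%classic
           (fun tau => beta (t - tau) * I (t - tau) * S (t - tau) * Psi tau)
       - gamma * I t - mu * I t)) ->
  (forall t : R, 0 < t -> is_derive t 1 RT
      (p * gamma * I t
       - p * gamma * LInt `[0, +oo[%classic (fun rho => I (t - rho) * Phi rho))) ->
  (forall t : R, 0 < t -> is_derive t 1 RP ((1 - p) * gamma * I t)) ->
  (forall t : R, 0 < t -> is_derive t 1 D (mu * I t)) ->
  forall t : R, 0 < t ->
    [/\ 0 <= S t, 0 <= E t, 0 <= I t, 0 <= RT t & 0 <= RP t].
Proof.
move=> dPsi dPhi sb b0 hb g0 m0 p0 p1 cS0 cI0 hS hI cSc cIc cE cRT cRP cD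
  E0 RT0 RP0 dS dE dI dRT dRP dD t t0.
have cb : continuous beta.
  by move=> x; apply: der_cont; exact: (sb 0%N x).
have SI := posSI _ _ _ _ _ _ _ _ _ _ _ _ _ _ dPsi dPhi cb b0 g0 m0 p0 cS0 cI0 hS hI cSc cIc dS dI.
have Sge0 : forall s, 0 <= S s by move=> s; case: (SI s) => /ltW.
have Ige0 : forall s, 0 <= I s by move=> s; case: (SI s) => _ /ltW.
have dPsi' := dPsi; case: dPsi' => [[th0 thL] Psige0 _ _ _].
split.
- exact: Sge0.
- pose F s := beta s * I s * S s.
  have cF : continuous F.
    move=> x; apply: (@continuousM _ _ (fun s => beta s * I s) S x); last exact: cSc.
    exact: (@continuousM _ _ beta I x (cb x) (cIc x)).
  have Fge0 : forall s, 0 <= F s.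
    by move=> s; apply: mulr_ge0; [apply: mulr_ge0 |].
  have hF : forall s, s <= 0 -> F s = beta0 * cI * cS.
    by move=> s s0; rewrite /F hb // hI // hS.
  have k := key F Psi E theta L (beta0 * cI * cS) 1 dPsi cF Fge0 hF ler01 cE.
  apply: k t0.
    by rewrite mul1r.
  by move=> z z0; rewrite mul1r; exact: dE.
- exact: Ige0.
- have hF : forall s : R, s <= 0 -> I s = cI by exact: hI.
  have k := key I Phi RT eps M cI (p * gamma) dPhi cIc Ige0 hF (mulr_ge0 p0 g0) cRT.
  apply: k t0.
    by rewrite RT0 alg4.
  move=> z z0; have := dRT z z0.
  by apply: is_derive_ext => [y|]; [by [] | rewrite mulrBr].
- have d1 : forall x : R, 0 < x < t -> is_derive x 1 RP ((1 - p) * gamma * I x).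
    by move=> x /andP[x0 _]; exact: dRP.
  have n1 : forall x : R, 0 < x < t -> 0 <= (1 - p) * gamma * I x.
    move=> x _; apply: mulr_ge0; last exact: Ige0.
    by apply: mulr_ge0; [rewrite subr_ge0 | exact: g0].
  have sB0 : `[0, t] `<=` `[0, +oo[.
    by move=> y; rewrite /= !in_itv /= => /andP[-> _].
  have := mono_MVT RP _ 0 t t0 d1 n1 (continuous_subspaceW sB0 cRP).
  apply: le_trans; rewrite RP0.
  apply: mulr_ge0.
    apply: mulr_ge0; last exact: ltW cI0.
    by apply: mulr_ge0; [rewrite subr_ge0 | exact: g0].
  apply: Rintegral_ge0 => y /=; rewrite in_itv /= => /andP[y1 _].
  by apply: mulr_ge0; [exact: Psige0 | exact: le_trans (ltW th0) y1].
Qed.
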